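(* Let $A$ be an $n\times n$ ASM and let $z_n=(n,n-1,\ldots,2,1)^T$. If $z_n^TA=z_n^TP$ for some $n\times n$ permutation matrix $P$, then $A=P$.
   Context: An $n\times n$ alternating sign matrix (ASM) is an $n\times n$ matrix with entries in $\{0,1,-1\}$ such that in every row and column the nonzeros alternate in sign, beginning and ending with $+1$. *)

(* Defs.v *)
From HB Require Import structures.
From mathcomp Require Import all_boot all_order all_algebra all_fingroup.
Set Implicit Arguments. Unset Strict Implicit. Unset Printing Implicit Defensive.
Import Order.TTheory GRing.Theory Num.Theory.
Local Open Scope ring_scope.

(* A sequence of integers "alternates in sign, beginning and ending with +1":
   the subsequence of its nonzero entries is nonempty, starts with 1, ends
   with 1, and consecutive nonzero entries have opposite signs (+1,-1). *)
Definition alt_sign_seq (s : seq int) : bool :=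
  let t := [seq x <- s | x != 0] in
  [&& all (fun x => (x == 0) || (x == 1) || (x == -1)) s,
      head 0 t == 1, last 0 t == 1 &
      sorted (fun x y => y == - x) t].

Definition is_ASM (n : nat) (A : 'M[int]_n) : bool :=
  [forall i : 'I_n, alt_sign_seq [seq A i j | j <- enum 'I_n]] &&
  [forall j : 'I_n, alt_sign_seq [seq A i j | i <- enum 'I_n]].

(* z_n = (n, n-1, ..., 1)^T, as a row vector z_n^T : entry j (0-based) is n - j. *)
Definition z_vec (n : nat) : 'rV[int]_n := \row_(j < n) (n - j)%:R.

(* Main.v *)
Require Import Defs.
From HB Require Import structures.
From mathcomp Require Import all_boot all_order all_algebra all_fingroup.
From mathcomp Require Import zify ring lra.
Import GRing.Theory Num.Theory.
Local Open Scope ring_scope.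

Lemma alt_aux (s : seq int) (c : int) :
  all (fun x => (x == 0) || (x == 1) || (x == -1)) s ->
  sorted (fun x y => y == - x) [seq x <- s | x != 0] ->
  head (1 - 2*c) [seq x <- s | x != 0] = 1 - 2*c ->
  (c == 0) || (c == 1) ->
  (forall k, (0 <= c + \sum_(x <- take k s) x <= 1)) /\
  (c + \sum_(x <- s) x = if last (2*c - 1) [seq x <- s | x != 0] == 1 then 1 else 0).
Proof.
elim: s c => [|x s IH] c /=.
  move=> _ _ _ hc; split; first by move=> k; rewrite big_nil addr0; lia.
  by rewrite big_nil addr0; case/orP: hc => /eqP ->.
case/andP=> hx hall.
case: eqP => [->|/eqP xn0] /=.
  move=> hs hh hc; have [IH1 IH2] := IH c hall hs hh hc.
  split; last by rewrite big_cons add0r.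
  by case=> [|k] /=; [rewrite big_nil addr0; lia | rewrite big_cons add0r].
move=> hs hh hc.
have hs' := path_sorted hs.
have hh' : head (1 - 2*(1-c)) [seq x <- s | x != 0] = 1 - 2*(1-c).
  move: hs hh; case: [seq x <- s | x != 0] => [|y t] //= /andP [/eqP -> _] ->; lia.
have hc' : (1 - c == 0) || (1 - c == 1) by lia.
have [IH1 IH2] := IH (1 - c) hall hs' hh' hc'.
split.
  case=> [|k] /=; first by rewrite big_nil addr0; lia.
  by rewrite big_cons addrA; have := IH1 k; rewrite hh; have -> : c + (1 - 2*c) = 1 - c by ring.
rewrite big_cons addrA hh.
have -> : c + (1 - 2*c) = 1 - c by ring.
rewrite IH2.
have -> : 2 * (1 - c) - 1 = x by rewrite hh; ring.
by rewrite hh.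
Qed.


Lemma alt_seq (s : seq int) : alt_sign_seq s ->
  (forall k, 0 <= \sum_(x <- take k s) x <= 1) /\ \sum_(x <- s) x = 1.
Proof.
case/and4P=> ha hh hl hs.
have hh' : head (1 - 2*0) [seq x <- s | x != 0] = 1 - 2*0.
  by move: hh; case: [seq x <- s | x != 0] => //= y t /eqP ->.
have [H1 H2] := @alt_aux s 0 ha hs hh' (orTb _).
split; first by move=> k; have := H1 k; rewrite add0r.
move: H2; rewrite add0r => ->.
by move: hl; case: [seq x <- s | x != 0] => //= y t ->.
Qed.

Lemma bridge n (F : 'I_n -> int) k :
  \sum_(x <- take k [seq F i | i <- enum 'I_n]) x = \sum_(i < n | (i < k)%N) F i.
Proof.
rewrite -map_take big_map.
rewrite [X in _ = X](_ : _ = \sum_(i <- take k (enum 'I_n) ++ drop k (enum 'I_n) | (i < k)%N) F i); last first.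
  by rewrite cat_take_drop big_enum_cond.
rewrite big_cat /=.
have Ht : forall i, i \in take k (enum 'I_n) -> (i < k)%N.
  move=> i /(map_f val); rewrite map_take val_enum_ord take_iota mem_iota.
  by move=> /andP [_]; rewrite add0n leq_min => /andP [].
have Hd : forall i, i \in drop k (enum 'I_n) -> ~~ (i < k)%N.
  move=> i /(map_f val); rewrite map_drop val_enum_ord drop_iota mem_iota.
  by rewrite -leqNgt add0n => /andP [].
rewrite [X in _ = _ + X]big1_seq ?addr0; last by move=> i /andP [h /Hd]; rewrite h.
rewrite [X in _ = X]big_seq_cond [X in X = _]big_seq.
by apply: eq_bigl => i; case: (boolP (i \in _)) => //= /Ht ->.
Qed.

Lemma cnt n m : (m <= n)%N -> \sum_(i < n | (i < m)%N) (1:int) = m%:R.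
Proof. by move=> h; rewrite -(big_ord_widen _ (fun _ => 1)) // sumr_const card_ord. Qed.

Lemma cnt3 n a b : (a <= n)%N ->
  \sum_(t < n | (t < a)%N) ((t < b)%N%:R : int) = (minn a b)%:R.
Proof.
move=> h.
rewrite (eq_bigr (fun t : 'I_n => if (t < b)%N then (1:int) else 0)); last by move=> t _; case: ltnP.
rewrite -big_mkcondr.
rewrite (eq_bigl (fun t : 'I_n => (t < minn a b)%N)); last by move=> t; rewrite leq_min.
by apply: cnt; rewrite geq_min h.
Qed.

Lemma cnt2 n i : (i <= n)%N -> \sum_(k < n | (i <= k)%N) (1:int) = (n - i)%:R.
Proof.
move=> h; apply/eqP; rewrite natrB // eq_sym subr_eq.
rewrite -(cnt n i h).
have -> : (n%:R : int) = \sum_(k < n) 1 by rewrite sumr_const card_ord.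
rewrite (bigID (fun k : 'I_n => (k < i)%N)) /=.
by rewrite addrC; apply/eqP; congr (_ + _); apply: eq_bigl => k /=; rewrite -?leqNgt.
Qed.

Lemma core n (B : 'M[int]_n) :
 (forall k t, 0 <= \sum_(i < n | (i < k)%N) B i t <= 1) ->
 (forall i, \sum_(t < n) B i t = 1) ->
 (forall t : 'I_n, \sum_(i < n) (n - i)%:R * B i t = (n - t)%:R) ->
 forall i t, B i t = (i == t)%:R.
Proof.
move=> hC hrow hw.
pose C k t := \sum_(i < n | (i < k)%N) B i t.
have rowC k : (k <= n)%N -> \sum_t C k t = k%:R.
  move=> hk; rewrite /C exchange_big /=.
  under eq_bigr do rewrite hrow.
  exact: cnt.
have weight t : \sum_(k < n) C k.+1 t = (n - t)%:R.
  rewrite -hw /C.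
  under eq_bigr do rewrite big_mkcond /=.
  rewrite exchange_big /=; apply: eq_bigr => i _.
  rewrite -(cnt2 n i (ltnW (ltn_ord i))) mulr_suml.
  rewrite [RHS]big_mkcond /=; apply: eq_bigr => k _.
  by rewrite ltnS; case: ifP => _; rewrite ?mul1r ?mul0r.
have key (k : 'I_n) t : C k.+1 t = (t < k.+1)%N%:R.
  have k0n : (k.+1 <= n)%N := ltn_ord k.
  pose f (kk : 'I_n) := \sum_(t < n | (t < k.+1)%N) ((t < kk.+1)%N%:R - C kk.+1 t).
  have fge0 kk : 0 <= f kk.
    rewrite /f sumrB subr_ge0 cnt3 //.
    case: (leqP k.+1 kk.+1) => hkk.
      rewrite -(cnt n k.+1 k0n).
      by apply: ler_sum => j _; case/andP: (hC kk.+1 j).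
    rewrite -(rowC kk.+1 (ltn_ord kk)).
    rewrite [X in _ <= X](bigID (fun j : 'I_n => (j < k.+1)%N)) /= lerDl.
    by apply: sumr_ge0 => j _; case/andP: (hC kk.+1 j).
  have fsum : \sum_(kk < n) f kk = 0.
    rewrite /f exchange_big /=; apply: big1 => j _.
    rewrite sumrB weight.
    rewrite (eq_bigr (fun kk : 'I_n => if (j <= kk)%N then (1:int) else 0)); last first.
      by move=> kk _; rewrite ltnS; case: ifP.
    by rewrite -big_mkcond cnt2 ?subrr // ltnW.
  have fk : f k = 0 by apply: (psumr_eq0P _ fsum) => // kk _; exact: fge0.
  have e1 : forall j : 'I_n, (j < k.+1)%N -> C k.+1 j = 1.
    move=> j hj; apply/eqP; rewrite -subr_eq0 -oppr_eq0 opprB; apply/eqP.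
    move: j hj; apply: psumr_eq0P.
      by move=> j hj; rewrite subr_ge0; case/andP: (hC k.+1 j).
    by rewrite -[RHS]fk /f; apply: eq_bigr => j hj; rewrite hj.
  have e0 : forall j : 'I_n, ~~ (j < k.+1)%N -> C k.+1 j = 0.
    apply: psumr_eq0P.
      by move=> j _; case/andP: (hC k.+1 j).
    have := rowC k.+1 k0n.
    rewrite (bigID (fun j : 'I_n => (j < k.+1)%N)) /=.
    rewrite (eq_bigr (fun _ => 1)); last by move=> j hj; apply: e1.
    by rewrite cnt // => /eqP; rewrite addrC -subr_eq0 addrK => /eqP.
  by case: ltnP => h; [apply: e1 | apply: e0; rewrite -leqNgt].
have gen m t : (m <= n)%N -> C m t = (t < m)%N%:R.
  case: m => [|m] hm; first by rewrite /C big1.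
  exact: (key (Ordinal hm)).
move=> i t.
have -> : B i t = C i.+1 t - C i t.
  rewrite /C (bigD1 i) //= -addrA; apply/eqP; rewrite addrC -subr_eq subrr eq_sym subr_eq0; apply/eqP.
  by apply: eq_bigl => j; rewrite ltnS ltn_neqAle andbC.
rewrite !gen ?(ltnW (ltn_ord i)) ?ltn_ord //.
rewrite ltnS -val_eqE /=; case: (ltngtP i t) => h /=.
all: by rewrite ?subrr ?subr0.
Qed.

Lemma pmxE n (s : 'S_n) i j : (perm_mx s : 'M[int]_n) i j = (s i == j)%:R.
Proof. by rewrite perm_mxEsub !mxE. Qed.

Theorem mainTheorem8 (n : nat) (A : 'M[int]_n) (s : 'S_n) :
  is_ASM A -> z_vec n *m A = z_vec n *m perm_mx s -> A = perm_mx s.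
Proof.
case/andP=> /forallP hr /forallP hc hz.
pose B := \matrix_(i < n, t < n) A i (s t).
have HB := @core n B.
have hC k t : 0 <= \sum_(i < n | (i < k)%N) B i t <= 1.
  have [H1 _] := alt_seq _ (hc (s t)).
  rewrite (eq_bigr (fun i => A i (s t))); last by move=> i _; rewrite mxE.
  by rewrite -(bridge n (fun i => A i (s t))).
have hrow i : \sum_(t < n) B i t = 1.
  have [_ H2] := alt_seq _ (hr i).
  rewrite (eq_bigr (fun t => A i (s t))); last by move=> t _; rewrite mxE.
  have -> : \sum_(t < n) A i (s t) = \sum_(j < n) A i j by rewrite [RHS](reindex_perm s).
  rewrite -H2 -[in RHS](take_oversize (n := n) (s := [seq A i j | j <- enum 'I_n])); last by rewrite size_map size_enum_ord.
  by rewrite bridge; apply: eq_bigl => j; rewrite ltn_ord.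
have hw t : \sum_(i < n) (n - i)%:R * B i t = (n - t)%:R.
  have := congr1 (fun M : 'M[int]_(1,n) => M 0 (s t)) hz; rewrite /= !mxE /z_vec => H.
  transitivity (\sum_j (\row_j0 ((n - j0)%:R : int)) 0 j * A j (s t)).
    by apply: eq_bigr => i _; rewrite !mxE.
  rewrite H (bigD1 t) //= !mxE eqxx mulr1 big1 ?addr0 // => i /negPf.
  by rewrite !mxE (inj_eq (@perm_inj _ s)) => ->; rewrite mulr0.
move=> {hz}.
apply/matrixP => i j.
have := HB hC hrow hw i ((s^-1)%g j); rewrite mxE permKV => ->.
by rewrite pmxE; congr (nat_of_bool _)%:R; apply/eqP/eqP => [->|<-]; rewrite ?permKV ?permK.
Qed.
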